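(* Let $\omega$ be the automorphism of $\mathcal A_\theta^{alg}$ with $U_1\mapsto U_2^{-1}$, $U_2\mapsto\lambda^{-1/2}U_1U_2^{-1}$, and let $H^0(\mathcal A_\theta^{alg},{}_{\omega}\mathcal A_\theta^{alg\ast})$ be the space of formal series $\varphi=\sum\varphi_{n,m}U_1^nU_2^m$ with $(\omega\cdot a)\varphi=\varphi a$ for all $a\in\mathcal A_\theta^{alg}$. Let $\mathbb Z_6$ be generated by the automorphism $-\omega$ with $U_1\mapsto U_2$, $U_2\mapsto\lambda^{-1/2}U_1^{-1}U_2$, acting termwise on this space. Then $H^0(\mathcal A_\theta^{alg},{}_{\omega}\mathcal A_\theta^{alg\ast})^{\mathbb Z_6}\cong\mathbb C^2$.
   Context: Let $\theta\in\mathbb R\setminus\mathbb Q$, $\lambda=e^{2\pi i\theta}$, $\lambda^s:=e^{2\pi i\theta s}$. $\mathcal A_\theta^{alg}$ is the complex algebra of finite sums $\sum a_{n,m}U_1^nU_2^m$ with $U_1,U_2$ invertible and $U_2U_1=\lambda U_1U_2$; formal series $\sum_{(n,m)\in\mathbb Z^2}\varphi_{n,m}U_1^nU_2^m$ with arbitrary coefficients form an $\mathcal A_\theta^{alg}$-bimodule via multiplication. Termwise action of an automorphism $h$: $h\cdot\sum\varphi_{n,m}U_1^nU_2^m=\sum\varphi_{n,m}\,h\cdot(U_1^nU_2^m)$. *)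

(* Defs.v *)
From HB Require Import structures.
From mathcomp Require Import all_boot all_order all_algebra.
From mathcomp Require Import all_classical all_reals all_analysis.
From mathcomp Require Import complex.
Set Implicit Arguments. Unset Strict Implicit. Unset Printing Implicit Defensive.
Import Order.TTheory GRing.Theory Num.Theory.
Local Open Scope ring_scope.
Local Open Scope classical_set_scope.

(* lambda^s := e^{2 pi i theta s} *)
Definition lam (R : realType) (theta s : R) : complex R :=
  Complex (cos (2 * pi * theta * s)) (sin (2 * pi * theta * s)).

(* index (n,m) of the monomial U1^n U2^m *)
Definition idx := (int * int)%type.

(* formal series  sum phi_{n,m} U1^n U2^m  with arbitrary coefficients;
   elements of A_theta^alg are the finitely supported ones *)
Definition fseries (R : realType) := idx -> complex R.

Definition finsupp (R : realType) (a : fseries R) : Prop :=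
  finite_set [set nm | a nm != 0].

(* a scalar multiple of a monomial:  (c, a, b) stands for  c U1^a U2^b *)
Definition mon (R : realType) := (complex R * int * int)%type.

(* product in A_theta^alg, from U2 U1 = lambda U1 U2:
   (c U1^a U2^b)(d U1^a' U2^b') = c d lambda^{b a'} U1^{a+a'} U2^{b+b'} *)
Definition mmul (R : realType) (theta : R) (x y : mon R) : mon R :=
  let: (c, a, b) := x in let: (d, a', b') := y in
  (c * d * lam theta (b * a')%:~R, a + a', b + b').

Definition mone (R : realType) : mon R := (1, 0, 0).

Definition minv (R : realType) (theta : R) (x : mon R) : mon R :=
  let: (c, a, b) := x in (c^-1 * lam theta (a * b)%:~R, - a, - b).

Definition mpow_nat (R : realType) (theta : R) (x : mon R) (n : nat) : mon R :=
  iter n (mmul theta x) (mone R).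

Definition mpow (R : realType) (theta : R) (x : mon R) (z : int) : mon R :=
  match z with
  | Posz n => mpow_nat theta x n
  | Negz n => mpow_nat theta (minv theta x) n.+1
  end.

(* the automorphism determined by U1 |-> g1, U2 |-> g2, on monomials:
   U1^n U2^m |-> g1^n g2^m *)
Definition aut_mon (R : realType) (theta : R) (g1 g2 : mon R) (nm : idx) : mon R :=
  mmul theta (mpow theta g1 nm.1) (mpow theta g2 nm.2).

Definition omega (R : realType) (theta : R) : idx -> mon R :=
  aut_mon theta (1, 0, -1) (lam theta (- 2^-1), 1, -1).

Definition momega (R : realType) (theta : R) : idx -> mon R :=
  aut_mon theta (1, 0, 1) (lam theta (- 2^-1), -1, 1).

Definition mon_apply (R : realType) (h : idx -> mon R) (x : mon R) : mon R :=
  let: (c, a, b) := x in let: (d, a', b') := h (a, b) in (c * d, a', b').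

Definition aut_pow (R : realType) (h : idx -> mon R) (k : nat) (nm : idx) : mon R :=
  iter k (mon_apply h) (1, nm.1, nm.2).

(* termwise action  h . sum phi_{n,m} U1^n U2^m = sum phi_{n,m} h(U1^n U2^m);
   the coefficient at (p,q) collects all terms landing on U1^p U2^q *)
Definition act (R : realType) (h : idx -> mon R) (phi : fseries R) : fseries R :=
  fun pq => \sum_(nm \in [set nm : idx | ((h nm).1.2, (h nm).2) = pq])
              (h nm).1.1 * phi nm.

(* left multiplication of a series by a finite sum b:
   (U1^n U2^m)(U1^n' U2^m') = lambda^{m n'} U1^{n+n'} U2^{m+m'} *)
Definition mulL (R : realType) (theta : R) (b phi : fseries R) : fseries R :=
  fun pq => \sum_(nm \in [set: idx])
    b nm * phi (pq.1 - nm.1, pq.2 - nm.2) * lam theta (nm.2 * (pq.1 - nm.1))%:~R.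

Definition mulR (R : realType) (theta : R) (phi a : fseries R) : fseries R :=
  fun pq => \sum_(nm \in [set: idx])
    phi (pq.1 - nm.1, pq.2 - nm.2) * a nm * lam theta ((pq.2 - nm.2) * nm.1)%:~R.

Definition H0_omega (R : realType) (theta : R) (phi : fseries R) : Prop :=
  forall a : fseries R, finsupp a ->
    mulL theta (act (omega theta) a) phi = mulR theta phi a.

Definition H0_omega_Z6 (R : realType) (theta : R) (phi : fseries R) : Prop :=
  H0_omega theta phi /\
  forall k : nat, act (aut_pow (momega theta) k) phi = phi.

(* Main.v *)
Require Import Defs.
From HB Require Import structures.
From mathcomp Require Import all_boot all_order all_algebra.
From mathcomp Require Import all_classical all_reals all_analysis.
From mathcomp Require Import complex.
From mathcomp Require Import ring lra zify.
Import Order.TTheory GRing.Theory Num.Theory.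
Local Open Scope ring_scope.
Section L.
Variables (R : realType) (theta : R).
Lemma lamD s t : lam theta (s + t) = lam theta s * lam theta t.
Proof.
rewrite /lam.
have -> : 2 * pi * theta * (s + t) = 2 * pi * theta * s + 2 * pi * theta * t by ring.
rewrite cosD sinD.
apply/eqP; rewrite eq_complex /=; apply/andP; split; apply/eqP; ring.
Qed.
Lemma lam0 : lam theta 0 = 1.
Proof. by rewrite /lam mulr0 cos0 sin0. Qed.
Lemma lam_neq0 s : lam theta s != 0.
Proof.
apply/negP=> /eqP H.
have := lamD s (-s); rewrite H mul0r subrr lam0 => /eqP; rewrite oner_eq0.
done.
Qed.
Lemma lam_eq s t : s = t -> lam theta s = lam theta t.
Proof. by move->. Qed.
Definition ri (z : int) : R := z%:~R.
Lemma riE z : z%:~R = ri z. Proof. by []. Qed.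
Lemma mmul_lam s1 a b s2 a' b' :
  mmul theta (lam theta s1, a, b) (lam theta s2, a', b') =
  (lam theta (s1 + s2 + ri b * ri a'), a + a', b + b').
Proof. by rewrite /mmul /ri !lamD intrM. Qed.
Lemma mpow_nat_lam s a b k :
  mpow_nat theta (lam theta s, a, b) k =
  (lam theta (s * k%:R + ri a * ri b * (k%:R * (k%:R - 1) / 2)), a * k%:Z, b * k%:Z).
Proof.
elim: k => [|k IH].
  by rewrite /mpow_nat /= /mone !(mulr0, mul0r, addr0) lam0.
rewrite /mpow_nat iterS -/(mpow_nat _ _ _) IH mmul_lam.
congr (_, _, _); last 2 first.
- by rewrite -addn1 PoszD; ring.
- by rewrite -addn1 PoszD; ring.
apply: lam_eq; rewrite /ri intrM -pmulrn -addn1 natrD; by field.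
Qed.
Lemma lamV s : (lam theta s)^-1 = lam theta (- s).
Proof.
apply: (@mulfI _ (lam theta s)); first exact: lam_neq0.
by rewrite divff ?lam_neq0 // -lamD subrr lam0.
Qed.
Lemma mpow_lam s a b z :
  mpow theta (lam theta s, a, b) z =
  (lam theta (s * ri z + ri a * ri b * (ri z * (ri z - 1) / 2)), a * z, b * z).
Proof.
case: z => n.
  by rewrite /mpow mpow_nat_lam /ri -pmulrn.
rewrite /mpow /minv lamV -[_ * _]/(lam theta (-s) * lam theta (ri (a * b))) -lamD.
rewrite mpow_nat_lam NegzE; congr (_, _, _); last 2 first.
- ring.
- ring.
apply: lam_eq; rewrite /ri !intrM !intrN -!pmulrn -addn1 natrD; by field.
Qed.
Local Open Scope classical_set_scope.

Definition cw (x : idx) : R := - (ri x.2) ^+ 2 / 2 - ri x.1 * ri x.2.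
Definition gw (x : idx) : idx := (x.2, - x.1 - x.2).
Definition gwi (x : idx) : idx := (- x.1 - x.2, x.1).
Definition gm (x : idx) : idx := (- x.2, x.1 + x.2).
Definition gmi (x : idx) : idx := (x.1 + x.2, - x.1).

Lemma gwK : cancel gw gwi. Proof. by case=> n m; rewrite /gw /gwi /=; congr (_, _); ring. Qed.
Lemma gwiK : cancel gwi gw. Proof. by case=> n m; rewrite /gw /gwi /=; congr (_, _); ring. Qed.
Lemma gmK : cancel gm gmi. Proof. by case=> n m; rewrite /gm /gmi /=; congr (_, _); ring. Qed.
Lemma gmiK : cancel gmi gm. Proof. by case=> n m; rewrite /gm /gmi /=; congr (_, _); ring. Qed.

Lemma omegaE x : omega theta x = (lam theta (cw x), (gw x).1, (gw x).2).
Proof.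
case: x => n m; rewrite /omega /aut_mon /=.
have h1 : (1 : complex R) = lam theta 0 by rewrite lam0.
rewrite {1}h1 !mpow_lam mmul_lam.
congr (_, _, _); last 2 first.
- ring.
- ring.
apply: lam_eq; rewrite /cw /ri /= ?(intrD, intrB, intrN, intrM) /=.
by field.
Qed.

Lemma momegaE x : momega theta x = (lam theta (cw x), (gm x).1, (gm x).2).
Proof.
case: x => n m; rewrite /momega /aut_mon /=.
have h1 : (1 : complex R) = lam theta 0 by rewrite lam0.
rewrite {1}h1 !mpow_lam mmul_lam.
congr (_, _, _); last 2 first.
- ring.
- ring.
apply: lam_eq; rewrite /cw /ri /= ?(intrD, intrB, intrN, intrM) /=.
by field.
Qed.
Definition idxof (t : mon R) : idx := (t.1.2, t.2).

Lemma act_single (h : idx -> mon R) (phi : fseries R) pq x0 :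
  (forall nm, idxof (h nm) = pq <-> nm = x0) -> act h phi pq = (h x0).1.1 * phi x0.
Proof.
move=> H; rewrite /act.
have -> : [set nm : idx | ((h nm).1.2, (h nm).2) = pq] = [set x0].
  by apply/funext => y /=; apply/propext; exact: H.
by rewrite fsbig_set1.
Qed.

Lemma sumT1 (F : idx -> complex R) x0 :
  (forall x, x != x0 -> F x = 0) -> \sum_(x \in [set: idx]) F x = F x0.
Proof.
move=> H; rewrite -(fsbig_widen [set x0]) ?fsbig_set1 //.
move=> x [_ /= nx]; apply: H; apply/eqP; exact: nx.
Qed.

Lemma mulL_omega (a phi : fseries R) pq :
  mulL theta (act (omega theta) a) phi pq =
  \sum_(i \in [set: idx]) a i * (lam theta (cw i) * phi (pq.1 - (gw i).1, pq.2 - (gw i).2)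
      * lam theta ((gw i).2 * (pq.1 - (gw i).1))%:~R).
Proof.
rewrite /mulL (reindex_fsbigT gw); last by exists gwi; [exact: gwK | exact: gwiK].
apply: eq_fsbigr => i _.
rewrite (@act_single (omega theta) a (gw i) i); last first.
  move=> nm; rewrite omegaE /idxof /=; split; last by move->.
  by move=> E; rewrite -[LHS]gwK -[RHS]gwK -E.
rewrite omegaE /=; ring.
Qed.

Lemma mulR_E (a phi : fseries R) pq :
  mulR theta phi a pq =
  \sum_(i \in [set: idx]) a i * (phi (pq.1 - i.1, pq.2 - i.2) * lam theta ((pq.2 - i.2) * i.1)%:~R).
Proof. by apply: eq_fsbigr => i _; ring. Qed.

Definition Hom (phi : fseries R) := forall i pq,
  lam theta (cw i) * phi (pq.1 - (gw i).1, pq.2 - (gw i).2)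
      * lam theta ((gw i).2 * (pq.1 - (gw i).1))%:~R =
  phi (pq.1 - i.1, pq.2 - i.2) * lam theta ((pq.2 - i.2) * i.1)%:~R.

Lemma H0_of_Hom phi : Hom phi -> H0_omega theta phi.
Proof.
move=> H a _; apply/funext => pq; rewrite mulL_omega mulR_E.
by apply: eq_fsbigr => i _; rewrite H.
Qed.

Definition dl (i : idx) : fseries R := fun nm => if nm == i then 1 else 0.

Lemma finsupp_dl i : finsupp (dl i).
Proof.
rewrite /finsupp (_ : [set nm | dl i nm != 0] = [set i]); first exact: finite_set1.
apply/funext => y /=; apply/propext; rewrite /dl; case: (y =P i) => [->|ne].
  by split=> // _; apply: oner_neq0.
by split=> [H|H]; [move: H; rewrite eqxx | case: ne].
Qed.

Lemma Hom_of_H0 phi : H0_omega theta phi -> Hom phi.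
Proof.
move=> H i pq; have := H (dl i) (finsupp_dl i).
move/(congr1 (fun f => f pq)); rewrite mulL_omega mulR_E.
rewrite !(sumT1 _ i); first by rewrite /dl eqxx !mul1r.
- by move=> x nx; rewrite /dl (negbTE nx) mul0r.
- by move=> x nx; rewrite /dl (negbTE nx) mul0r.
Qed.
Definition Q (x : idx) : R := (ri x.1 ^+ 2 + 4 * ri x.1 * ri x.2 + ri x.2 ^+ 2) / 6.
Definition E (x : idx) : complex R := lam theta (Q x).
Definition psi (phi : fseries R) (x : idx) := phi x * lam theta (- Q x).

Lemma phi_psi phi x : phi x = psi phi x * E x.
Proof. by rewrite /psi /E -mulrA -lamD addNr lam0 mulr1. Qed.

Lemma lam_move a b d s t (u v : complex R) :
  lam theta a * u * lam theta b = v * lam theta d -> d - a - b + s = t ->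
  u * lam theta s = v * lam theta t.
Proof.
move=> H <-.
have ha : lam theta (-a) * lam theta a = 1 by rewrite -lamD addNr lam0.
have hb : lam theta b * lam theta (-b) = 1 by rewrite -lamD subrr lam0.
rewrite !lamD.
transitivity (lam theta (-a) * (lam theta a * u * lam theta b) * lam theta (-b) * lam theta s).
  transitivity ((lam theta (-a) * lam theta a) * u * (lam theta b * lam theta (-b)) * lam theta s).
    by rewrite ha hb mul1r mulr1.
  ring.
rewrite H; ring.
Qed.

Lemma Hom_at phi : Hom phi -> forall i pq y z,
  y = (pq.1 - (gw i).1, pq.2 - (gw i).2) -> z = (pq.1 - i.1, pq.2 - i.2) ->
  lam theta (cw i) * phi y * lam theta ((gw i).2 * (pq.1 - (gw i).1))%:~R =
  phi z * lam theta ((pq.2 - i.2) * i.1)%:~R.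
Proof. by move=> H i pq y z -> ->; apply: H. Qed.

Lemma psiA phi : Hom phi -> forall x y, x.1 = y.1 + 1 -> x.2 = y.2 + 1 ->
  psi phi x = psi phi y.
Proof.
move=> H [p' q'] [p q] /= -> ->; rewrite /psi.
have HH := @Hom_at phi H (1, 0) (p + 1, q) (p + 1, q + 1) (p, q).
have HH' := HH ltac:(by rewrite /gw /=; congr (_, _); ring) ltac:(by rewrite /gw /=; congr (_, _); ring).
eapply lam_move; first exact: HH'.
rewrite /cw /gw /Q /ri /= ?(intrD, intrB, intrN, intrM) /=; by field.
Qed.

Lemma psiC phi : Hom phi -> forall x y, x.1 = y.1 - 1 -> x.2 = y.2 + 2 ->
  psi phi x = psi phi y.
Proof.
move=> H [p' q'] [p q] /= -> ->; rewrite /psi.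
have HH := @Hom_at phi H (0, 1) (p, q + 1) (p - 1, q + 2) (p, q).
have HH' := HH ltac:(by rewrite /gw /=; congr (_, _); ring) ltac:(by rewrite /gw /=; congr (_, _); ring).
eapply lam_move; first exact: HH'.
rewrite /cw /gw /Q /ri /= ?(intrD, intrB, intrN, intrM) /=; by field.
Qed.

Lemma psiB phi : Hom phi -> forall x y, x.1 = y.1 -> x.2 = y.2 + 3 ->
  psi phi x = psi phi y.
Proof.
move=> H [p' q'] [p q] /= -> ->.
rewrite (@psiA phi H (p, q + 3) (p - 1, q + 2)) /=; try ring.
by apply: (@psiC phi H (p - 1, q + 2) (p, q)); rewrite /=; ring.
Qed.

Lemma int_iter (f : int -> complex R) : (forall z, f (z + 1) = f z) ->
  forall x z, f (x + z) = f x.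
Proof.
move=> H.
have Hn : forall y (k : nat), f (y + k%:Z) = f y.
  move=> y; elim=> [|k IH]; first by rewrite addr0.
  by rewrite -addn1 PoszD addrA H IH.
move=> x [] k; first exact: Hn.
rewrite -(Hn (x + Negz k) k.+1); congr f; rewrite NegzE; ring.
Qed.

Lemma psi_class phi : Hom phi -> forall n m,
  psi phi (n, m) = psi phi (0, ((m - n) %% 3)%Z).
Proof.
move=> H n m.
have s1 : psi phi (n, m) = psi phi (0, m - n).
  pose f z := psi phi (z, m - n + z).
  have Hf : forall z, f (z + 1) = f z.
    by move=> z; rewrite /f; apply: (@psiA phi H (z + 1, m - n + (z + 1)) (z, m - n + z)); rewrite /=; ring.
  have := int_iter _ Hf 0 n; rewrite /f add0r addr0 => <-.
  by congr psi; congr (_, _); ring.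
rewrite s1; set k := m - n.
pose g z := psi phi (0, (k %% 3)%Z + z * 3).
have Hg : forall z, g (z + 1) = g z.
  by move=> z; rewrite /g; apply: (@psiB phi H (0, (k %% 3)%Z + (z + 1) * 3) (0, (k %% 3)%Z + z * 3)); rewrite /=; ring.
have := int_iter _ Hg 0 (k %/ 3)%Z; rewrite /g add0r mul0r addr0 => <-.
by congr psi; congr (_, _); rewrite {1}(divz_eq k 3); ring.
Qed.
Definition cnd (x : idx) : bool := ((x.2 - x.1) %% 3 == 0)%Z.
Definition phib (b : bool) : fseries R := fun x => if cnd x == b then E x else 0.

Lemma modz3_add A k : (((k * 3 + A) %% 3)%Z == 0) = ((A %% 3)%Z == 0).
Proof. by rewrite modzMDl. Qed.

Lemma modz3_N A : (((- A) %% 3)%Z == 0) = ((A %% 3)%Z == 0).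
Proof.
have e m : ((m %% 3)%Z == 0) = (3 %| m)%Z := sameP eqP (@dvdz_mod0P 3 m).
by rewrite !e !dvdzE abszN.
Qed.

Lemma Hom_phib b : Hom (phib b).
Proof.
move=> [i1 i2] [p q]; rewrite /phib /gw /=.
have -> : cnd (p - i2, q - (- i1 - i2)) = cnd (p - i1, q - i2).
  rewrite /cnd /= (_ : q - (- i1 - i2) - (p - i2) = i2 * 3 + (q - i2 - (p - i1))).
    by rewrite modz3_add.
  ring.
case: (_ == b); last by rewrite !(mulr0, mul0r).
rewrite /E -!lamD; apply: lam_eq; rewrite /cw /Q /ri /= ?(intrD, intrB, intrN, intrM) /=.
by field.
Qed.

Lemma Hmu_phib b y : phib b (gm y) = lam theta (cw y) * phib b y.
Proof.
case: y => n m; rewrite /phib /gm /=.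
have -> : cnd (- m, n + m) = cnd (n, m).
  rewrite /cnd /= (_ : n + m - - m = m * 3 + - (m - n)).
    by rewrite modz3_add modz3_N.
  ring.
case: (_ == b); last by rewrite mulr0.
rewrite /E -!lamD; apply: lam_eq; rewrite /cw /Q /ri /= ?(intrD, intrB, intrN, intrM) /=.
by field.
Qed.

Lemma aut_pow_idx (h : idx -> mon R) k nm :
  idxof (aut_pow h k nm) = iter k (fun y => idxof (h y)) nm.
Proof.
elim: k => [|k IH]; first by case: nm.
rewrite /aut_pow /= in IH *.
move: IH; case: (iter k (mon_apply h) _) => [[c a] b] /= <-.
by case: (h (a, b)) => [[d a'] b'].
Qed.

Lemma aut_pow_coef (h : idx -> mon R) (phi : fseries R) :
  (forall y, phi (idxof (h y)) = (h y).1.1 * phi y) ->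
  forall k nm, phi (idxof (aut_pow h k nm)) = (aut_pow h k nm).1.1 * phi nm.
Proof.
move=> H; elim=> [|k IH] nm.
  by rewrite /aut_pow /= mul1r; case: nm.
rewrite /aut_pow /= in IH *.
move: (IH nm); case: (iter k (mon_apply h) _) => [[c a] b] /= IHk.
have := H (a, b); case: (h (a, b)) => [[d a'] b'] /= ->.
by rewrite IHk mulrA [d * c]mulrC.
Qed.

Lemma iter_cancel (f g : idx -> idx) : cancel f g -> forall k, cancel (iter k f) (iter k g).
Proof.
move=> fK; elim=> [|k IH] x; first by [].
by rewrite iterSr iterS fK IH.
Qed.

Lemma HG y : idxof (momega theta y) = gm y.
Proof. by rewrite momegaE /idxof; case: (gm y). Qed.

Lemma act_aut_pow (phi : fseries R) k pq :
  act (aut_pow (momega theta) k) phi pq =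
  (aut_pow (momega theta) k (iter k gmi pq)).1.1 * phi (iter k gmi pq).
Proof.
apply: act_single => nm.
rewrite aut_pow_idx (@eq_iter _ _ gm HG); split => [<-|->].
  by rewrite iter_cancel //; exact: gmK.
by apply: iter_cancel; exact: gmiK.
Qed.

Lemma act_inv (phi : fseries R) : (forall y, phi (gm y) = lam theta (cw y) * phi y) ->
  forall k, act (aut_pow (momega theta) k) phi = phi.
Proof.
move=> H k; apply/funext => pq.
have H' : forall y, phi (idxof (momega theta y)) = (momega theta y).1.1 * phi y.
  by move=> y; rewrite HG H momegaE.
rewrite act_aut_pow -(aut_pow_coef _ _ H') aut_pow_idx (@eq_iter _ _ gm HG).
by rewrite iter_cancel //; exact: gmiK.
Qed.
Lemma aut_pow1 (h : idx -> mon R) nm : (aut_pow h 1 nm).1.1 = (h nm).1.1.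
Proof.
rewrite /aut_pow /=; case: nm => a b /=.
by case: (h (a, b)) => [[d a'] b'] /=; rewrite mul1r.
Qed.

Lemma momega_coef x : (momega theta x).1.1 = lam theta (cw x).
Proof. by rewrite momegaE. Qed.

Lemma E_neq0 x : E x != 0.
Proof. exact: lam_neq0. Qed.

Lemma main_sec :
  exists phi1 phi2 : fseries R,
    [/\ H0_omega_Z6 theta phi1, H0_omega_Z6 theta phi2,
        (forall phi : fseries R, H0_omega_Z6 theta phi ->
           exists c1 c2 : complex R, phi = (fun nm => c1 * phi1 nm + c2 * phi2 nm)) &
        (forall c1 c2 : complex R, (fun nm => c1 * phi1 nm + c2 * phi2 nm) = (fun _ => 0) ->
           c1 = 0 /\ c2 = 0)].
Proof.
exists (phib true), (phib false); split.
- split; [apply: H0_of_Hom; exact: Hom_phib | apply: act_inv; exact: Hmu_phib].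
- split; [apply: H0_of_Hom; exact: Hom_phib | apply: act_inv; exact: Hmu_phib].
- move=> phi [Hw Hinv]; have H := Hom_of_H0 _ Hw.
  exists (psi phi (0, 0)), (psi phi (0, 1)).
  have c12 : psi phi (0, 2) = psi phi (0, 1).
    have := congr1 (fun f => f (-1, 1)) (Hinv 1%N).
    rewrite /= act_aut_pow.
    have -> : iter 1 gmi (-1, 1) = (0, 1) by [].
    rewrite aut_pow1 momega_coef.
    rewrite (phi_psi phi (0, 1)) (phi_psi phi (-1, 1)) (psi_class _ H 0 1) (psi_class _ H (-1) 1).
    have -> : ((1 - 0) %% 3)%Z = 1 by rewrite modz_small; lia.
    have -> : ((1 - -1) %% 3)%Z = 2 by rewrite modz_small; lia.
    have -> : lam theta (cw (0, 1)) * (psi phi (0, 1) * E (0, 1)) =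
              psi phi (0, 1) * E (-1, 1).
      rewrite mulrCA; congr (_ * _); rewrite /E -lamD; apply: lam_eq.
      by rewrite /cw /Q /ri /= ?(intrD, intrB, intrN, intrM) /=; field.
    by move/(mulIf (E_neq0 _)).
  apply/funext => -[n m].
  rewrite (phi_psi phi (n, m)) (psi_class _ H n m) /phib /cnd /=.
  have r0 : (0 <= ((m - n) %% 3)%Z) by apply: modz_ge0.
  have r3 : (((m - n) %% 3)%Z < 3) by exact: (ltz_mod (m - n) (d := 3)).
  have : ((m - n) %% 3)%Z = 0 \/ ((m - n) %% 3)%Z = 1 \/ ((m - n) %% 3)%Z = 2 by lia.
  case=> [->|[->|->]] /=.
  + by rewrite mulr0 addr0.
  + by rewrite mulr0 add0r.
  + by rewrite mulr0 add0r c12.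
- move=> c1 c2 Hc.
  have h0 := congr1 (fun f => f (0, 0)) Hc; have h1 := congr1 (fun f => f (0, 1)) Hc.
  rewrite /phib /cnd /= in h0 h1.
  move: h0 h1.
  rewrite !mulr0 addr0 add0r => /eqP h0 /eqP h1.
  move: h0 h1; rewrite !mulf_eq0 !(negbTE (E_neq0 _)) !orbF => /eqP -> /eqP ->.
  by [].
Qed.
End L.

Theorem mainTheorem10 (R : realType) (theta : R) (htheta : irrational theta) :
  exists phi1 phi2 : fseries R,
    [/\ H0_omega_Z6 theta phi1, H0_omega_Z6 theta phi2,
        (forall phi : fseries R, H0_omega_Z6 theta phi ->
           exists c1 c2 : complex R, phi = (fun nm => c1 * phi1 nm + c2 * phi2 nm)) &
        (forall c1 c2 : complex R, (fun nm => c1 * phi1 nm + c2 * phi2 nm) = (fun _ => 0) ->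
           c1 = 0 /\ c2 = 0)].
Proof. exact: main_sec. Qed.
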